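(* Let $K$ be a semifield and $P$ a polygon. Let $d_1,\dots,d_m$ be pairwise non-crossing internal diagonals of $P$ dividing $P$ into subpolygons $P_1,\dots,P_{m+1}$, and let $D_i$ be a dissection of $P_i$ for each $i$. Then the disjoint union $D = \{d_1,\dots,d_m\} \cup D_1 \cup \dots \cup D_{m+1}$ is a dissection of $P$. Moreover, let $f_i : \operatorname{diag}(P_i) \to K$ be a weak frieze with respect to $D_i$ for each $i$, and assume that whenever $P_i$ and $P_j$ share a diagonal $d$ (necessarily an edge of both), $f_i(d) = f_j(d)$. Then there is a unique weak frieze $f : \operatorname{diag}(P) \to K$ with respect to $D$ such that $f|_{\operatorname{diag}(P_i)} = f_i$ for each $i$.
   Context: A semifield is a set $K$ with binary operations $+$ and $\cdot$ such that $+$ is associative and commutative, $(K,\cdot)$ is a commutative group, and $\cdot$ distributes over $+$; no subtraction is assumed. A polygon is a finite set $V$ of at least three vertices with a cyclic order (pictured as a convex polygon in the plane). A diagonal is a two-element subset of $V$ (edges $\{\alpha,\alpha^+\}$, $\alpha^+$ the successor, count as diagonals); $\operatorname{diag}(P)$ is the set of diagonals; non-edges are internal diagonals. $\{\alpha,\beta\}$ and $\{\gamma,\delta\}$ cross if $\alpha,\beta,\gamma,\delta$ are four distinct vertices appearing in the cyclic order as $\alpha,\gamma,\beta,\delta$ or $\alpha,\delta,\beta,\gamma$. A subpolygon is a subset of $V$ of at least three vertices with the induced cyclic order; its diagonals are diagonals of $P$. A dissection is a (possibly empty) set of pairwise non-crossing internal diagonals. Write $f(\alpha,\beta):=f(\{\alpha,\beta\})$.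 A map $f:\operatorname{diag}(P)\to K$ is a weak frieze with respect to a dissection $D$ if $f(\alpha,\beta)f(\gamma,\delta) = f(\alpha,\gamma)f(\beta,\delta) + f(\alpha,\delta)f(\beta,\gamma)$ whenever $\{\alpha,\beta\}$, $\{\gamma,\delta\}$ are crossing diagonals with $\{\gamma,\delta\} \in D$. *)

(* Defs.v *)
From mathcomp Require Import all_boot.
Set Implicit Arguments. Unset Strict Implicit. Unset Printing Implicit Defensive.

Definition is_semifield (K : Type) (add mul : K -> K -> K) : Prop :=
  associative add /\ commutative add /\ associative mul /\ commutative mul /\
  (exists e : K, left_id e mul /\ forall x, exists y, mul x y = e) /\
  left_distributive mul add.

(* The polygon P has vertex set 'I_n (n >= 3) with the cyclic order
   0 -> 1 -> ... -> n-1 -> 0. *)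

Definition cbetween n (x y z : 'I_n) : bool :=
  [|| (x < y < z)%N, (y < z < x)%N | (z < x < y)%N].

(* a, c, b, d are four distinct vertices appearing in this cyclic order *)
Definition cyc4 n (a c b d : 'I_n) : bool := cbetween a c b && cbetween b d a.

Definition crossv n (a b c d : 'I_n) : bool := cyc4 a c b d || cyc4 a d b c.

Definition cross_set n (d e : {set 'I_n}) : bool :=
  [exists a : 'I_n, exists b : 'I_n, exists c : 'I_n, exists c' : 'I_n,
     [&& d == [set a; b], e == [set c; c'] & crossv a b c c']].

(* subpolygon: a subset of at least three vertices, with induced cyclic order;
   the whole polygon is [set: 'I_n]. *)
Definition subpolygon n (S : {set 'I_n}) : bool := (3 <= #|S|)%N.

Definition is_diag n (S d : {set 'I_n}) : bool := (d \subset S) && (#|d| == 2).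

Definition is_edge n (S d : {set 'I_n}) : bool :=
  [exists a in S, exists b in S,
     [&& a != b, d == [set a; b] & [forall x in S, ~~ cbetween a x b]]].

Definition is_internal n (S d : {set 'I_n}) : bool := is_diag S d && ~~ is_edge S d.

Definition is_dissection n (S : {set 'I_n}) (D : {set {set 'I_n}}) : Prop :=
  (forall d, d \in D -> is_internal S d) /\
  (forall d e, d \in D -> e \in D -> ~~ cross_set d e).

(* the subpolygons into which a dissection E of P divides P: subpolygons all of
   whose edges are edges of P or belong to E, and containing no element of E as
   an internal diagonal *)
Definition is_cell n (E : {set {set 'I_n}}) (S : {set 'I_n}) : bool :=
  [&& subpolygon S,
      [forall d : {set 'I_n}, is_edge S d ==> (is_edge [set: 'I_n] d || (d \in E))]
    & [forall d in E, ~~ is_internal S d]].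

Definition cells n (E : {set {set 'I_n}}) : {set {set 'I_n}} := [set S | is_cell E S].

(* f : diag(S) -> K (values off diag(S) irrelevant), f(a,b) := f [set a; b].
   Weak frieze on the subpolygon S with respect to D. *)
Definition weak_frieze (K : Type) (add mul : K -> K -> K) n
    (S : {set 'I_n}) (D : {set {set 'I_n}}) (f : {set 'I_n} -> K) : Prop :=
  forall a b c d : 'I_n, a \in S -> b \in S -> c \in S -> d \in S ->
    crossv a b c d -> [set c; d] \in D ->
    mul (f [set a; b]) (f [set c; d]) =
    add (mul (f [set a; c]) (f [set b; d])) (mul (f [set a; d]) (f [set b; c])).

(* Main.v *)
Require Import Defs.
From mathcomp Require Import all_boot zify.
Set Implicit Arguments. Unset Strict Implicit. Unset Printing Implicit Defensive.


Definition carc n (u v x : 'I_n) : bool := [|| (x:nat) == u, (x:nat) == v | cbetween u x v].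
Ltac cycl := unfold carc, crossv, cyc4, cbetween in *; lia.

Definition dist n (x y : 'I_n) : nat := if (x <= y)%N then y - x else y + n - x.

Lemma crossv_sym1 n (a b c d : 'I_n) : crossv a b c d = crossv b a c d.
Proof. apply/idP/idP; cycl. Qed.
Lemma crossv_sym2 n (a b c d : 'I_n) : crossv a b c d = crossv a b d c.
Proof. apply/idP/idP; cycl. Qed.
Lemma crossv_sym3 n (a b c d : 'I_n) : crossv a b c d = crossv c d a b.
Proof. apply/idP/idP; cycl. Qed.

Lemma set2_eq n (a b c d : 'I_n) : [set a; b] = [set c; d] -> (a = c /\ b = d) \/ (a = d /\ b = c).
Proof.
move=> E.
have ha : a \in [set c; d] by rewrite -E !inE eqxx.
have hb : b \in [set c; d] by rewrite -E !inE eqxx orbT.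
have hc : c \in [set a; b] by rewrite E !inE eqxx.
have hd : d \in [set a; b] by rewrite E !inE eqxx orbT.
move: ha hb hc hd; rewrite !inE.
clear E; case/orP=>/eqP ea; case/orP=>/eqP eb; move=> hc hd.
- by subst; move: hd; rewrite orbb => /eqP ->; right.
- by left.
- by right.
- by subst; move: hc; rewrite orbb => /eqP ->; left.
Qed.

Lemma cross_setE n (a b c d : 'I_n) : cross_set [set a; b] [set c; d] = crossv a b c d.
Proof.
apply/idP/idP.
  case/existsP=> a' /existsP[b' /existsP[c' /existsP[d' /and3P[/eqP e1 /eqP e2 cr]]]].
  case: (set2_eq e1)=> [[-> ->]|[-> ->]]; case: (set2_eq e2)=> [[-> ->]|[-> ->]];
  first [ exact cr | rewrite crossv_sym1; exact cr | rewrite crossv_sym2; exact cr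
        | rewrite crossv_sym1 crossv_sym2; exact cr ].
move=> cr; apply/existsP; exists a; apply/existsP; exists b; apply/existsP; exists c;
 apply/existsP; exists d; by rewrite !eqxx cr.
Qed.

Lemma cross_set_sym n (d e : {set 'I_n}) : cross_set d e = cross_set e d.
Proof.
apply/idP/idP; case/existsP=> a /existsP[b /existsP[c /existsP[c' /and3P[/eqP -> /eqP -> cr]]]];
 by rewrite cross_setE crossv_sym3.
Qed.

Definition edgeo n (S : {set 'I_n}) (a b : 'I_n) :=
  [/\ a \in S, b \in S, a != b & forall x, x \in S -> ~~ cbetween a x b].

Lemma is_edgeP n (S d : {set 'I_n}) :
  is_edge S d <-> exists a b, edgeo S a b /\ d = [set a; b].
Proof.
split.
  case/exists_inP=> a aS /exists_inP[b bS /and3P[ab /eqP -> /forall_inP H]].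
  by exists a, b; split.
case=> a [b [[aS bS ab H] ->]].
apply/exists_inP; exists a => //; apply/exists_inP; exists b => //.
by rewrite ab eqxx; apply/forall_inP.
Qed.

Lemma diagP n (S d : {set 'I_n}) :
  is_diag S d <-> exists a b, [/\ a \in S, b \in S, a != b & d = [set a; b]].
Proof.
split.
  case/andP=> sub /cards2P[a [b [ab E]]]; exists a, b; subst d.
  by split=> //; apply: (subsetP sub); rewrite !inE eqxx ?orbT.
case=> a [b [aS bS ab ->]]; apply/andP; split.
  by apply/subsetP=> x; rewrite !inE => /orP[]/eqP->.
by rewrite cards2 ab.
Qed.

Lemma edgeo_nocross n (S : {set 'I_n}) a b c d :
  edgeo S a b -> c \in S -> d \in S -> ~~ crossv a b c d.
Proof.
case=> _ _ _ H cS dS; rewrite /crossv /cyc4.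
by rewrite (negbTE (H _ cS)) (negbTE (H _ dS)).
Qed.

Lemma edge_nocross n (S : {set 'I_n}) a b c d :
  is_edge S [set a; b] -> c \in S -> d \in S -> ~~ crossv a b c d.
Proof.
case/is_edgeP=> a' [b' [eo E]] cS dS.
case: (set2_eq E)=> [[-> ->]|[-> ->]]; first exact: edgeo_nocross eo cS dS.
rewrite crossv_sym1; exact: edgeo_nocross eo cS dS.
Qed.

Lemma edge_sub n (S Q d : {set 'I_n}) : S \subset Q -> d \subset S -> is_edge Q d -> is_edge S d.
Proof.
move=> SQ dS /is_edgeP[a [b [[aQ bQ ab H] E]]]; apply/is_edgeP; exists a, b; split=> //.
subst d; split=> //; try (by apply: (subsetP dS); rewrite !inE eqxx ?orbT).
by move=> x xS; apply: H; apply: (subsetP SQ).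
Qed.

Lemma edge_diag n (S d : {set 'I_n}) : is_edge S d -> is_diag S d.
Proof.
case/is_edgeP=> a [b [[aS bS ab _] ->]]; apply/diagP; by exists a, b.
Qed.

Lemma dist_cb n (a x b : 'I_n) : cbetween a x b = (0 < dist a x < dist a b)%N.
Proof.
have := ltn_ord a; have := ltn_ord x; have := ltn_ord b.
rewrite /cbetween /dist; case: (leqP a x); case: (leqP a b) => *; apply/idP/idP; lia.
Qed.

Lemma ord_eqE n (u v : 'I_n) : (u == v) = ((u:nat) == v). Proof. by []. Qed.

Lemma dist_spec n (x y : 'I_n) : ((x <= y)%N /\ dist x y = y - x) \/ ((y < x)%N /\ dist x y = y + n - x).
Proof. rewrite /dist; case: leqP; auto. Qed.

Lemma ordE n (x y : 'I_n) : (x:nat) = y -> x = y.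
Proof. exact: val_inj. Qed.

Lemma next_exists n (S : {set 'I_n}) a : a \in S -> (exists y, y \in S /\ y != a) ->
  exists b, [/\ b \in S, b != a, edgeo S a b & forall x, x \in S -> x != a -> (dist a b <= dist a x)%N].
Proof.
move=> aS [y [yS ya]].
have Py : (y \in S) && (y != a) by rewrite /= yS ya.
case: (@arg_minnP _ y (fun x => (x \in S) && (x != a)) (fun x => dist a x) Py) => b /andP[bS ba] H.
exists b; split=> //; last by move=> x xS xa; apply: H; rewrite xS xa.
split=> // [|x xS]; first by rewrite eq_sym.
rewrite dist_cb; case: (eqVneq x a) => [->|xa].
  by rewrite /dist leqnn subnn.
have := H x; rewrite xS xa => /(_ isT); lia.
Qed.

Lemma gap_edge n (S : {set 'I_n}) q : q \notin S -> (2 <= #|S|)%N ->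
  exists s t, edgeo S s t /\ cbetween s q t.
Proof.
move=> qS cS.
have [s0 s0S] : exists s0, s0 \in S.
  by apply/set0Pn; rewrite -card_gt0; apply: leq_trans cS.
case: (@arg_minnP _ s0 (fun x => x \in S) (fun x => dist x q) s0S) => s sS Hs.
have [y [yS ys]] : exists y, y \in S /\ y != s.
  have : (0 < #|S :\ s|)%N by move: cS; rewrite (cardsD1 s S) sS; lia.
  by rewrite card_gt0 => /set0Pn[y]; rewrite !inE => /andP[? ?]; exists y.
case: (next_exists sS (ex_intro _ y (conj yS ys))) => t [tS ts eo Ht].
exists s, t; split=> //.
have qs : (q:nat) != s by apply/eqP => /ordE e; move: qS; rewrite e sS.
have qt : (q:nat) != t by apply/eqP => /ordE e; move: qS; rewrite e tS.
have ts' : (t:nat) != s by [].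
have := Hs t tS.
have := dist_spec s q; have := dist_spec t q; have := dist_spec s t.
have := ltn_ord s; have := ltn_ord t; have := ltn_ord q.
rewrite /cbetween; lia.
Qed.

Definition half n (Q : {set 'I_n}) (u v : 'I_n) := [set x in Q | carc u v x].

Lemma half_sub n (Q : {set 'I_n}) u v : half Q u v \subset Q.
Proof. by apply/subsetP=> x; rewrite inE => /andP[]. Qed.

Lemma arc_cover n (u v x : 'I_n) : u != v -> carc u v x || carc v u x.
Proof. rewrite ord_eqE; cycl. Qed.

Lemma arc_both n (u v x : 'I_n) : u != v -> carc u v x -> carc v u x -> x = u \/ x = v.
Proof.
move=> uv h1 h2.
have : (x:nat) = u \/ (x:nat) = v by move: uv; rewrite ord_eqE; cycl.
by case=> /ordE; auto.
Qed.

Lemma arc_l n (u v : 'I_n) : carc u v u. Proof. by rewrite /carc eqxx. Qed.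
Lemma arc_r n (u v : 'I_n) : carc u v v. Proof. by rewrite /carc eqxx orbT. Qed.

Lemma gap_side n (Q : {set 'I_n}) u v : u \in Q -> v \in Q -> u != v ->
  ~~ is_edge Q [set u; v] -> exists2 q, q \in Q & cbetween u q v.
Proof.
move=> uQ vQ uv ne.
case: (boolP [exists q in Q, cbetween u q v]) => [/exists_inP[q ? ?]|/exists_inP H].
  by exists q.
case/negP: ne; apply/is_edgeP; exists u, v; split=> //; split=> // x xQ.
by apply/negP=> h; apply: H; exists x.
Qed.

Lemma card3 n (A : {set 'I_n}) a b c : a \in A -> b \in A -> c \in A ->
  a != b -> a != c -> b != c -> (3 <= #|A|)%N.
Proof.
move=> aA bA cA ab ac bc.
rewrite (cardsD1 a A) aA.
have : [set b; c] \subset A :\ a.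
  by apply/subsetP=> x; rewrite !inE => /orP[]/eqP->; rewrite ?bA ?cA eq_sym ?ab ?ac.
move/subset_leq_card; rewrite cards2 bc /=; lia.
Qed.



Lemma half_poly n (Q : {set 'I_n}) u v : u \in Q -> v \in Q -> u != v ->
  ~~ is_edge Q [set u; v] -> subpolygon (half Q u v).
Proof.
move=> uQ vQ uv ne; case: (gap_side uQ vQ uv ne) => q qQ qb.
rewrite /subpolygon; apply: (@card3 _ _ u v q); rewrite ?inE ?uQ ?vQ ?qQ ?arc_l ?arc_r //=.
- by rewrite /carc qb !orbT.
- by apply/eqP=> e; subst; move: qb; rewrite /cbetween; lia.
- by apply/eqP=> e; subst; move: qb; rewrite /cbetween; lia.
Qed.

Lemma half_edge_e n (Q : {set 'I_n}) u v : u \in Q -> v \in Q -> u != v ->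
  is_edge (half Q u v) [set u; v].
Proof.
move=> uQ vQ uv; apply/is_edgeP; exists v, u; split; last by rewrite setUC.
split; rewrite ?inE ?uQ ?vQ ?arc_l ?arc_r ?(eq_sym v) //.
move=> x; rewrite inE => /andP[_]; move: uv; rewrite ord_eqE; cycl.
Qed.

Lemma half_edge_inv n (Q : {set 'I_n}) u v d : u \in Q -> v \in Q -> u != v ->
  is_edge (half Q u v) d -> d = [set u; v] \/ is_edge Q d.
Proof.
move=> uQ vQ uv /is_edgeP[a [b [[aH bH ab H] ->]]].
move: (aH) (bH); rewrite !inE => /andP[aQ aA] /andP[bQ bA].
case: (boolP [exists x in Q, cbetween a x b]) => [/exists_inP[x xQ xb]|/exists_inP N].
  left.
  have hv : ~~ cbetween a v b by apply: H; rewrite inE arc_r vQ.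
  have hu : ~~ cbetween a u b by apply: H; rewrite inE arc_l uQ.
  have hx : ~~ carc u v x by apply/negP=> hx; move: (H x); rewrite inE xQ hx xb => /(_ isT).
  have [ea eb] : (a:nat) = v /\ (b:nat) = u by move: uv ab; rewrite !ord_eqE; cycl.
  by rewrite (ordE ea) (ordE eb) setUC.
right; apply/is_edgeP; exists a, b; split=> //; split=> // x xQ.
by apply/negP=> h; apply: N; exists x.
Qed.

Lemma nocross_arc n (u v x y z w : 'I_n) : u != v -> carc u v x -> carc u v y ->
  carc v u z -> carc v u w -> ~~ crossv x y z w.
Proof. rewrite ord_eqE; cycl. Qed.

Lemma nocross_sets n (u v : 'I_n) (d d' : {set 'I_n}) : u != v ->
  (forall x, x \in d -> carc u v x) -> (forall x, x \in d' -> carc v u x) -> ~~ cross_set d d'.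
Proof.
move=> uv H1 H2; apply/negP.
case/existsP=> a /existsP[b /existsP[c /existsP[c' /and3P[/eqP e1 /eqP e2 cr]]]].
subst.
have ha := H1 a; have hb := H1 b; have hc := H2 c; have hc' := H2 c'.
rewrite !inE !eqxx ?orbT in ha hb hc hc'.
by move/negP: (nocross_arc uv (ha isT) (hb isT) (hc isT) (hc' isT)); apply.
Qed.

Lemma split_diag n (u v x y : 'I_n) : u != v -> ~~ crossv x y u v ->
  (carc u v x && carc u v y) || (carc v u x && carc v u y).
Proof. rewrite ord_eqE; cycl. Qed.

Lemma internal_half n (Q : {set 'I_n}) u v d : u \in Q -> v \in Q -> u != v ->
  is_internal (half Q u v) d -> is_internal Q d.
Proof.
move=> uQ vQ uv /andP[/andP[dH c2] ne]; apply/andP; split.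
  by rewrite /is_diag c2 andbT; apply: subset_trans dH (half_sub _ _ _).
by apply/negP=> e; case/negP: ne; apply: edge_sub (half_sub _ _ _) dH e.
Qed.

Lemma cfX1 n (u v a b : 'I_n) : cbetween u a v -> cbetween v b u -> crossv a b u v.
Proof. cycl. Qed.
Lemma cfX2 n (u v a s : 'I_n) : cbetween u a v -> cbetween v s u -> cbetween a s u.
Proof. cycl. Qed.
Lemma cfX3 n (u v a b s : 'I_n) : cbetween u b a -> cbetween u a v -> cbetween v s u -> cbetween a s b.
Proof. cycl. Qed.
Lemma cfX4 n (u v b : 'I_n) : ~~ cbetween v b u -> ~~ cbetween u b v -> (b:nat) != u -> (u:nat) != v -> (b:nat) = v.
Proof. cycl. Qed.
Lemma cfX5 n (u v s : 'I_n) : cbetween u s v -> cbetween v s u -> False.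
Proof. cycl. Qed.
Lemma dist_inj n (u a b : 'I_n) : dist u a = dist u b -> a = b.
Proof.
move=> e; apply: ordE.
have := dist_spec u b; have := dist_spec u a; have := ltn_ord a; have := ltn_ord b; have := ltn_ord u; lia.
Qed.
Lemma dist_pos n (u b : 'I_n) : b != u -> (0 < dist u b)%N.
Proof. rewrite ord_eqE /dist; case: (leqP u b); have := ltn_ord u; lia. Qed.

Lemma confine_half n (S : {set 'I_n}) u v : u != v ->
  (forall a b, edgeo S a b -> ~~ crossv a b u v) ->
  (exists2 s, s \in S & cbetween u s v) -> (exists2 s, s \in S & cbetween v s u) -> v \in S.
Proof.
move=> uv NC [s1 s1S c1] [s2 s2S c2].
have P1 : (s1 \in S) && cbetween u s1 v by rewrite s1S c1.
case: (@arg_maxnP _ s1 (fun x => (x \in S) && cbetween u x v) (fun x => dist u x) P1)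
  => a /andP[aS ca] Ha.
have s2a : s2 != a.
  by apply/eqP=> e; subst; case: (cfX5 ca c2).
case: (next_exists aS (ex_intro _ s2 (conj s2S s2a))) => b [bS ba eo Hb].
have nc := NC a b eo.
have h1 := Hb s2 s2S s2a.
have h2 : cbetween u b v -> (dist u b <= dist u a)%N.
  by move=> h; apply: (Ha b); rewrite bS h.
have X1 : ~~ cbetween v b u.
  by apply/negP=> h; move/negP: nc; apply; apply: cfX1 ca h.
have bu : b != u.
  apply/eqP=> e; subst b.
  have : cbetween a s2 u by apply: cfX2 ca c2.
  by rewrite dist_cb => /andP[_ hh]; move: h1; rewrite leqNgt hh.
have X3 : ~~ cbetween u b v.
  apply/negP=> h; have h3 := h2 h.
  have h4 : dist u b != dist u a.
    by apply/negP=> /eqP /dist_inj e; move/negP: ba; apply; apply/eqP.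
  have bp := dist_pos bu.
  have h5 : cbetween u b a by rewrite dist_cb bp /= ltn_neqAle h4 h3.
  have : cbetween a s2 b by apply: cfX3 h5 ca c2.
  by rewrite dist_cb => /andP[_ hh]; move: h1; rewrite leqNgt hh.
suff : (b:nat) = v by move/ordE <-.
have bu2 : (b:nat) != u := bu. have uv2 : (u:nat) != v := uv. exact: cfX4 X1 X3 bu2 uv2.
Qed.

Lemma arc_of_not n (u v x : 'I_n) : u != v -> ~~ cbetween u x v -> carc v u x.
Proof. rewrite ord_eqE; cycl. Qed.

Lemma confine n (Q S : {set 'I_n}) u v : S \subset Q -> u != v ->
  (forall a b, edgeo S a b -> ~~ crossv a b u v) -> ~~ is_internal S [set u; v] ->
  S \subset half Q u v \/ S \subset half Q v u.
Proof.
move=> SQ uv NC ni.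
case: (boolP [exists s in S, cbetween v s u]) => [/exists_inP[s2 s2S c2]|/exists_inP h2].
  case: (boolP [exists s in S, cbetween u s v]) => [/exists_inP[s1 s1S c1]|/exists_inP h1].
    have vS : v \in S by apply: (confine_half uv NC); [exists s1|exists s2].
    have uS : u \in S.
      apply: (confine_half (v:=u) (u:=v)); rewrite 1?eq_sym //; [|exists s2 => //|exists s1 => //].
      by move=> a b eo; rewrite crossv_sym2; apply: NC.
    case/negP: ni; apply/andP; split; first by apply/diagP; exists u, v.
    apply/negP=> /is_edgeP[a [b [[aS bS ab H] E]]].
    case: (set2_eq E) => [[ea eb]|[ea eb]]; subst a b.
      by move: (H s1 s1S); rewrite c1.
    by move: (H s2 s2S); rewrite c2.
  right; apply/subsetP=> x xS; rewrite inE (subsetP SQ _ xS) /=.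
  have : ~~ cbetween u x v by apply/negP=> h; apply: h1; exists x.
  exact: arc_of_not.
left; apply/subsetP=> x xS; rewrite inE (subsetP SQ _ xS) /=.
have : ~~ cbetween v x u by apply/negP=> h; apply: h2; exists x.
by apply: arc_of_not; rewrite eq_sym.
Qed.

Definition is_cellQ n (Q : {set 'I_n}) (E : {set {set 'I_n}}) (S : {set 'I_n}) : bool :=
  [&& S \subset Q, subpolygon S,
      [forall d : {set 'I_n}, is_edge S d ==> (is_edge Q d || (d \in E))]
    & [forall d in E, ~~ is_internal S d]].

Definition cellsQ n (Q : {set 'I_n}) (E : {set {set 'I_n}}) : {set {set 'I_n}} :=
  [set S | is_cellQ Q E S].

Lemma cellQP n (Q : {set 'I_n}) (E : {set {set 'I_n}}) (S : {set 'I_n}) : S \in cellsQ Q E <->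
  [/\ S \subset Q, subpolygon S, (forall d, is_edge S d -> is_edge Q d \/ d \in E)
    & (forall d, d \in E -> ~~ is_internal S d)].
Proof.
rewrite inE; split.
  case/and4P=> h1 h2 /forallP h3 /forall_inP h4; split=> // d /(implyP (h3 d)) /orP; tauto.
case=> h1 h2 h3 h4; apply/and4P; split=> //.
  by apply/forallP=> d; apply/implyP=> /h3 [->|->] //; rewrite orbT.
by apply/forall_inP.
Qed.

Lemma cellsT n (E : {set {set 'I_n}}) : cellsQ [set: 'I_n] E = cells E.
Proof. by apply/setP=> S; rewrite !inE /is_cellQ /is_cell subsetT. Qed.

Definition halfE n (E : {set {set 'I_n}}) (Q : {set 'I_n}) (u v : 'I_n) :=
  [set d in E | (d \subset half Q u v) && (d != [set u; v])].

Lemma halfE_sub n (E : {set {set 'I_n}}) (Q : {set 'I_n}) (u v : 'I_n) : halfE E Q u v \subset E.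
Proof. by apply/subsetP=> d; rewrite inE => /andP[]. Qed.

Lemma halfE_in n (E : {set {set 'I_n}}) (Q : {set 'I_n}) (u v : 'I_n) (d : {set 'I_n}) : d \in halfE E Q u v -> d \subset half Q u v.
Proof. by rewrite inE => /and3P[]. Qed.

Lemma both_halves n (Q : {set 'I_n}) u v (d : {set 'I_n}) : u != v ->
  d \subset half Q u v -> d \subset half Q v u -> #|d| = 2 -> d = [set u; v].
Proof.
move=> uv h1 h2 c2; have : #|d| == 2 by rewrite c2.
case/cards2P=> a [b [ab E]]; subst d.
have F : forall x, x \in [set a; b] -> x = u \/ x = v.
  move=> x xd; have := subsetP h1 x xd; have := subsetP h2 x xd; rewrite !inE.
  by case/andP=> _ h2' /andP[_ h1']; apply: arc_both.
have := F a; have := F b; rewrite !inE !eqxx ?orbT => /(_ isT) fb /(_ isT) fa.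
by case: fa => ea; case: fb => eb; rewrite ea eb in ab *; first [done | by rewrite setUC | by rewrite eqxx in ab].
Qed.



Lemma cell_nocross n (Q : {set 'I_n}) (E : {set {set 'I_n}}) (u v : 'I_n) (S : {set 'I_n}) : is_dissection Q E -> [set u; v] \in E ->
  u \in Q -> v \in Q -> S \in cellsQ Q E -> forall a b, edgeo S a b -> ~~ crossv a b u v.
Proof.
move=> [_ nc] eE uQ vQ /cellQP[SQ _ H _] a b eo.
have : is_edge S [set a; b] by apply/is_edgeP; exists a, b.
case/H=> [h|h]; first exact: edge_nocross h uQ vQ.
by rewrite -cross_setE; apply: nc.
Qed.

Lemma cell_confine n (Q : {set 'I_n}) (E : {set {set 'I_n}}) (u v : 'I_n) (S : {set 'I_n}) : is_dissection Q E -> [set u; v] \in E ->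
  u \in Q -> v \in Q -> u != v -> S \in cellsQ Q E ->
  S \subset half Q u v \/ S \subset half Q v u.
Proof.
move=> dE eE uQ vQ uv Sc; have := Sc; case/cellQP=> SQ _ _ H4.
apply: confine => //; last exact: H4.
exact: cell_nocross Sc.
Qed.

Lemma half_edge_e' n (Q : {set 'I_n}) u v : u \in Q -> v \in Q -> u != v ->
  is_edge (half Q v u) [set u; v].
Proof. by move=> uQ vQ uv; rewrite setUC; apply: half_edge_e; rewrite // eq_sym. Qed.

Lemma cell_to_half n (Q : {set 'I_n}) (E : {set {set 'I_n}}) (u v : 'I_n) (S : {set 'I_n}) : [set u; v] \in E ->
  u \in Q -> v \in Q -> u != v -> S \in cellsQ Q E -> S \subset half Q u v ->
  S \in cellsQ (half Q u v) (halfE E Q u v).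
Proof.
move=> eE uQ vQ uv /cellQP[SQ Sp H3 H4] Sh; apply/cellQP; split=> //.
  move=> d ed; have dS : d \subset S by case/andP: (edge_diag ed).
  case: (H3 d ed) => [h|h].
    by left; apply: edge_sub (half_sub _ _ _) (subset_trans dS Sh) h.
  case: (eqVneq d [set u; v]) => [->|ne]; first by left; apply: half_edge_e.
  by right; rewrite inE h ne (subset_trans dS Sh).
by move=> d /(subsetP (halfE_sub _ _ _ _)); apply: H4.
Qed.

Lemma E_split n (Q : {set 'I_n}) (E : {set {set 'I_n}}) (u v : 'I_n) (d : {set 'I_n}) : is_dissection Q E -> [set u; v] \in E ->
  u != v -> d \in E ->
  [\/ d = [set u; v], d \in halfE E Q u v | d \in halfE E Q v u].
Proof.
move=> [H1 H2] eE uv dE.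
case: (eqVneq d [set u; v]) => [->|ne]; first by constructor 1.
have := H1 d dE; case/andP=> /diagP[x [y [xQ yQ xy ed]]] _; subst d.
have := H2 _ _ dE eE; rewrite cross_setE => nc.
case/orP: (split_diag uv nc) => /andP[hx hy].
  constructor 2; rewrite /halfE inE dE ne andbT; apply/subsetP=> z.
  by rewrite !inE => /orP[]/eqP->; rewrite ?xQ ?yQ ?hx ?hy.
constructor 3; rewrite /halfE inE dE (setUC [set v]) ne andbT; apply/subsetP=> z.
by rewrite !inE => /orP[]/eqP->; rewrite ?xQ ?yQ ?hx ?hy.
Qed.

Lemma cell_of_half n (Q : {set 'I_n}) (E : {set {set 'I_n}}) (u v : 'I_n) (S : {set 'I_n}) : is_dissection Q E -> [set u; v] \in E ->
  u \in Q -> v \in Q -> u != v -> S \in cellsQ (half Q u v) (halfE E Q u v) ->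
  S \in cellsQ Q E.
Proof.
move=> dE eE uQ vQ uv /cellQP[Sh Sp H3 H4]; apply/cellQP; split=> //.
- exact: subset_trans Sh (half_sub _ _ _).
- move=> d ed; case: (H3 d ed) => [h|h].
    by case: (half_edge_inv uQ vQ uv h) => [->|h']; [right|left].
  by right; exact: (subsetP (halfE_sub _ _ _ _) _ h).
- move=> d dE'; case: (E_split dE eE uv dE') => [ed|h|h].
  + subst d; apply/negP=> /andP[/andP[dS _] ne]; case/negP: ne.
    exact: edge_sub Sh dS (half_edge_e uQ vQ uv).
  + exact: H4.
  + apply/negP=> /andP[/andP[dS c2] _].
    have h2 := halfE_in h.
    have := both_halves uv (subset_trans dS Sh) h2 (eqP c2).
    by move: h; rewrite inE (setUC [set v]) => /and3P[_ _ /eqP].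
Qed.

Lemma halfE_diss n (Q : {set 'I_n}) (E : {set {set 'I_n}}) (u v : 'I_n) : is_dissection Q E ->
  u \in Q -> v \in Q -> u != v -> is_dissection (half Q u v) (halfE E Q u v).
Proof.
move=> [H1 H2] uQ vQ uv; split; last first.
  by move=> d e /(subsetP (halfE_sub _ _ _ _)) dE /(subsetP (halfE_sub _ _ _ _)); apply: H2.
move=> d; rewrite inE => /and3P[dE dh ne].
case/andP: (H1 d dE) => /andP[_ c2] nedge; apply/andP; split; first by rewrite /is_diag dh.
apply/negP=> /(half_edge_inv uQ vQ uv) [e|e]; first by rewrite e eqxx in ne.
by rewrite e in nedge.
Qed.

Lemma halfE_card n (Q : {set 'I_n}) (E : {set {set 'I_n}}) (u v : 'I_n) : [set u; v] \in E -> (#|halfE E Q u v| < #|E|)%N.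
Proof.
move=> eE; apply: proper_card; apply/properP; split; first exact: halfE_sub.
by exists [set u; v] => //; rewrite inE eqxx !andbF.
Qed.

Lemma cb_rev n (s x t : 'I_n) : ~~ cbetween s x t -> (x:nat) != s -> (x:nat) != t -> (s:nat) != t -> cbetween t x s.
Proof. cycl. Qed.

Lemma cells0 n (Q S : {set 'I_n}) : subpolygon Q -> (S \in cellsQ Q set0) <-> S = Q.
Proof.
move=> Qp; split; last first.
  move=> ->; apply/cellQP; split=> //; first by move=> d; left.
  by move=> d; rewrite inE.
case/cellQP=> SQ Sp H3 _.
apply/eqP; rewrite eqEsubset SQ /=; apply/subsetP=> q qQ.
apply/negPn/negP=> qS.
have [s [t [eo cb]]] := gap_edge qS (leq_trans (isT : (2 <= 3)%N) Sp).
have : is_edge S [set s; t] by apply/is_edgeP; exists s, t.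
case/H3 => [|]; last by rewrite inE.
case/is_edgeP=> a [b [[aQ bQ ab H] E]].
case: eo => sS tS st Hs.
case: (set2_eq E) => [[ea eb]|[ea eb]]; subst a b.
  by move: (H q qQ); rewrite cb.
have [x [xS xs xt]] : exists x, [/\ x \in S, x != s & x != t].
  have : (0 < #|S :\ s :\ t|)%N.
    move: Sp; rewrite /subpolygon (cardsD1 s S) sS (cardsD1 t (S :\ s)) !inE tS eq_sym st /=.
    by rewrite !add1n !ltnS.
  by rewrite card_gt0 => /set0Pn[x]; rewrite !inE => /and3P[? ? ?]; exists x.
have h1 := Hs x xS.
have : cbetween t x s.
  by apply: cb_rev h1 xs xt st.
by move: (H x (subsetP SQ x xS)) => /negP.
Qed.

Definition Dof n (Q : {set 'I_n}) (E : {set {set 'I_n}}) (Dsub : {set 'I_n} -> {set {set 'I_n}}) :=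
  E :|: \bigcup_(S in cellsQ Q E) Dsub S.

Lemma DofP n (Q : {set 'I_n}) (E : {set {set 'I_n}}) (Dsub : {set 'I_n} -> {set {set 'I_n}}) (x : {set 'I_n}) :
  x \in Dof Q E Dsub <-> x \in E \/ exists2 S, S \in cellsQ Q E & x \in Dsub S.
Proof.
rewrite /Dof inE; split.
  by case/orP=> [h|/bigcupP[S ? ?]]; [left|right; exists S].
by case=> [->//|[S ? ?]]; apply/orP; right; apply/bigcupP; exists S.
Qed.

Lemma pick_e n (Q : {set 'I_n}) (E : {set {set 'I_n}}) (e : {set 'I_n}) : is_dissection Q E -> e \in E ->
  exists u v, [/\ e = [set u; v], u \in Q, v \in Q, u != v & ~~ is_edge Q [set u; v]].
Proof.
move=> [H1 _] eE; case/andP: (H1 e eE) => /diagP[u [v [uQ vQ uv ->]]] ne.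
by exists u, v.
Qed.

Lemma Dof_sub n (Q : {set 'I_n}) (E : {set {set 'I_n}}) (Dsub : {set 'I_n} -> {set {set 'I_n}}) (x : {set 'I_n}) : is_dissection Q E ->
  (forall S, S \in cellsQ Q E -> is_dissection S (Dsub S)) ->
  x \in Dof Q E Dsub -> is_diag Q x.
Proof.
move=> [H1 _] HD /DofP [xE|[S Sc xS]]; first by case/andP: (H1 x xE).
case: (HD S Sc) => H _; case/andP: (H x xS) => /andP[xS' c2] _.
case/cellQP: Sc => SQ _ _ _.
by rewrite /is_diag c2 andbT (subset_trans xS' SQ).
Qed.



Lemma Dof_split n (Q : {set 'I_n}) (E : {set {set 'I_n}}) (u v : 'I_n) (Dsub : {set 'I_n} -> {set {set 'I_n}}) (x : {set 'I_n}) : is_dissection Q E -> [set u; v] \in E ->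
  u \in Q -> v \in Q -> u != v -> x \in Dof Q E Dsub ->
  [\/ x = [set u; v], x \in Dof (half Q u v) (halfE E Q u v) Dsub
    | x \in Dof (half Q v u) (halfE E Q v u) Dsub].
Proof.
move=> dE eE uQ vQ uv /DofP [xE|[S Sc xS]].
  case: (E_split dE eE uv xE) => [->|h|h]; [constructor 1|constructor 2|constructor 3];
  by rewrite // /Dof inE h.
have eE' : [set v; u] \in E by rewrite setUC.
case: (cell_confine dE eE uQ vQ uv Sc) => h.
  by constructor 2; apply/DofP; right; exists S => //; apply: (cell_to_half eE uQ vQ uv Sc h).
have vu : v != u by rewrite eq_sym.
by constructor 3; apply/DofP; right; exists S => //; apply: (cell_to_half eE' vQ uQ vu Sc h).
Qed.

Lemma Dof_of_half n (Q : {set 'I_n}) (E : {set {set 'I_n}}) (u v : 'I_n) (Dsub : {set 'I_n} -> {set {set 'I_n}}) (x : {set 'I_n}) : is_dissection Q E -> [set u; v] \in E ->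
  u \in Q -> v \in Q -> u != v -> x \in Dof (half Q u v) (halfE E Q u v) Dsub -> x \in Dof Q E Dsub.
Proof.
move=> dE eE uQ vQ uv /DofP [xE|[S Sc xS]].
  by apply/DofP; left; exact: (subsetP (halfE_sub E Q u v) _ xE).
by apply/DofP; right; exists S => //; apply: (cell_of_half dE eE uQ vQ uv Sc).
Qed.

Lemma cells_of_half n (Q : {set 'I_n}) (E : {set {set 'I_n}}) (u v : 'I_n) (S : {set 'I_n}) : is_dissection Q E -> [set u; v] \in E ->
  u \in Q -> v \in Q -> u != v ->
  S \in cellsQ Q E <-> S \in cellsQ (half Q u v) (halfE E Q u v) \/ S \in cellsQ (half Q v u) (halfE E Q v u).
Proof.
move=> dE eE uQ vQ uv.
have eE' : [set v; u] \in E by rewrite setUC.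
have vu : v != u by rewrite eq_sym.
split.
  move=> Sc; case: (cell_confine dE eE uQ vQ uv Sc) => h; [left|right].
  exact: (cell_to_half eE uQ vQ uv Sc h).
exact: (cell_to_half eE' vQ uQ vu Sc h).
by case=> h; [apply: (cell_of_half dE eE uQ vQ uv h)|apply: (cell_of_half dE eE' vQ uQ vu h)].
Qed.

Lemma sub_arc n (Q : {set 'I_n}) u v (x : {set 'I_n}) : x \subset half Q u v -> forall z, z \in x -> carc u v z.
Proof. by move=> h z /(subsetP h); rewrite inE => /andP[]. Qed.

Lemma e_arc n (u v : 'I_n) z : z \in [set u; v] -> carc u v z && carc v u z.
Proof. by rewrite !inE => /orP[]/eqP->; rewrite !arc_l !arc_r. Qed.

Lemma partA k n (Q : {set 'I_n}) (E : {set {set 'I_n}}) : (#|E| <= k)%N -> subpolygon Q ->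
  is_dissection Q E -> forall d, is_edge Q d -> exists2 S, S \in cellsQ Q E & d \subset S.
Proof.
elim: k Q E => [|k IH] Q E cE Qp dE d ed.
  have E0 : E = set0 by apply/eqP; move: cE; rewrite leqn0 cards_eq0.
  subst E; exists Q; first by apply/cells0.
  by case/andP: (edge_diag ed).
case: (set_0Vmem E) => [E0|[e eE]].
  subst E; exists Q; first by apply/cells0.
  by case/andP: (edge_diag ed).
case: (pick_e dE eE) => u [v [ee uQ vQ uv ne]]; subst e.
have eE' : [set v; u] \in E by rewrite setUC.
have vu : v != u by rewrite eq_sym.
have ne' : ~~ is_edge Q [set v; u] by rewrite setUC.
case/is_edgeP: (ed) => a [b [eo ed']]; subst d.
have nc : ~~ crossv a b u v by apply: edgeo_nocross eo uQ vQ.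
have dsub : forall u' v', carc u' v' a -> carc u' v' b -> [set a; b] \subset half Q u' v'.
  case: eo => aQ bQ _ _ u' v' ha hb.
  by apply/subsetP=> z; rewrite !inE => /orP[]/eqP->; rewrite ?aQ ?bQ ?ha ?hb.
case/orP: (split_diag uv nc) => /andP[ha hb].
  have h1 : (#|halfE E Q u v| <= k)%N by rewrite -ltnS; apply: leq_trans (halfE_card Q eE) cE.
  have := IH _ _ h1 (half_poly uQ vQ uv ne) (halfE_diss dE uQ vQ uv) [set a; b]
    (edge_sub (half_sub Q u v) (dsub _ _ ha hb) ed).
  by case=> S Sc dS; exists S => //; exact: (cell_of_half dE eE uQ vQ uv Sc).
have h1 : (#|halfE E Q v u| <= k)%N by rewrite -ltnS; apply: leq_trans (halfE_card Q eE') cE.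
have := IH _ _ h1 (half_poly vQ uQ vu ne') (halfE_diss dE vQ uQ vu) [set a; b]
  (edge_sub (half_sub Q v u) (dsub _ _ ha hb) ed).
by case=> S Sc dS; exists S => //; exact: (cell_of_half dE eE' vQ uQ vu Sc).
Qed.

Lemma Dof0 n (Q : {set 'I_n}) Dsub x : subpolygon Q -> x \in Dof Q set0 Dsub <-> x \in Dsub Q.
Proof.
move=> Qp; rewrite DofP inE; split.
  by case=> // [[S /(cells0 _ Qp) -> ]].
by move=> h; right; exists Q => //; apply/cells0.
Qed.

Lemma Dof_half_sub n (Q : {set 'I_n}) (E : {set {set 'I_n}}) u v Dsub x :
  is_dissection Q E -> [set u; v] \in E -> u \in Q -> v \in Q -> u != v ->
  (forall S, S \in cellsQ Q E -> is_dissection S (Dsub S)) ->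
  x \in Dof (half Q u v) (halfE E Q u v) Dsub -> forall z, z \in x -> carc u v z.
Proof.
move=> dE eE uQ vQ uv HD xD.
have HD1 : forall S, S \in cellsQ (half Q u v) (halfE E Q u v) -> is_dissection S (Dsub S).
  by move=> S Sc; apply: HD; apply: (cell_of_half dE eE uQ vQ uv Sc).
have := Dof_sub (halfE_diss dE uQ vQ uv) HD1 xD.
by case/andP=> h _; apply: sub_arc h.
Qed.

Lemma partB k n (Q : {set 'I_n}) (E : {set {set 'I_n}}) Dsub : (#|E| <= k)%N -> subpolygon Q ->
  is_dissection Q E -> (forall S, S \in cellsQ Q E -> is_dissection S (Dsub S)) ->
  is_dissection Q (Dof Q E Dsub) /\
  (forall S T, S \in cellsQ Q E -> T \in cellsQ Q E -> S != T -> [disjoint Dsub S & Dsub T]).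
Proof.
elim: k Q E => [|k IH] Q E cE Qp dE HD.
  have E0 : E = set0 by apply/eqP; move: cE; rewrite leqn0 cards_eq0.
  subst E; have [H1 H2] := HD Q (proj2 (cells0 Q Qp) erefl); split.
    by split=> [d /(Dof0 _ _ Qp)|d e /(Dof0 _ _ Qp) h1 /(Dof0 _ _ Qp)]; [apply: H1|apply: H2].
  by move=> S T /(cells0 _ Qp) -> /(cells0 _ Qp) ->; rewrite eqxx.
case: (set_0Vmem E) => [E0|[e eE]].
  subst E; have [H1 H2] := HD Q (proj2 (cells0 Q Qp) erefl); split.
    by split=> [d /(Dof0 _ _ Qp)|d e /(Dof0 _ _ Qp) h1 /(Dof0 _ _ Qp)]; [apply: H1|apply: H2].
  by move=> S T /(cells0 _ Qp) -> /(cells0 _ Qp) ->; rewrite eqxx.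
case: (pick_e dE eE) => u [v [ee uQ vQ uv ne]]; subst e.
have eE' : [set v; u] \in E by rewrite setUC.
have vu : v != u by rewrite eq_sym.
have ne' : ~~ is_edge Q [set v; u] by rewrite setUC.
have HD1 : forall S, S \in cellsQ (half Q u v) (halfE E Q u v) -> is_dissection S (Dsub S).
  by move=> S Sc; apply: HD; apply: (cell_of_half dE eE uQ vQ uv Sc).
have HD2 : forall S, S \in cellsQ (half Q v u) (halfE E Q v u) -> is_dissection S (Dsub S).
  by move=> S Sc; apply: HD; apply: (cell_of_half dE eE' vQ uQ vu Sc).
have h1 : (#|halfE E Q u v| <= k)%N by rewrite -ltnS; apply: leq_trans (halfE_card Q eE) cE.
have h2 : (#|halfE E Q v u| <= k)%N by rewrite -ltnS; apply: leq_trans (halfE_card Q eE') cE.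
have [[I1 N1] D1] := IH _ _ h1 (half_poly uQ vQ uv ne) (halfE_diss dE uQ vQ uv) HD1.
have [[I2 N2] D2] := IH _ _ h2 (half_poly vQ uQ vu ne') (halfE_diss dE vQ uQ vu) HD2.
have A1 := Dof_half_sub dE eE uQ vQ uv HD.
have A2 := Dof_half_sub dE eE' vQ uQ vu HD.
have Ae := @e_arc _ u v.
split; first split.
- move=> x /(Dof_split dE eE uQ vQ uv) [->|h|h].
  + by case: dE => H _; apply: H.
  + exact: (internal_half uQ vQ uv (I1 x h)).
  + exact: (internal_half vQ uQ vu (I2 x h)).
- move=> x y /(Dof_split dE eE uQ vQ uv) hx /(Dof_split dE eE uQ vQ uv) hy.
  have C12 : forall x y : {set 'I_n}, (forall z, z \in x -> carc u v z) -> (forall z, z \in y -> carc v u z) ->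
      ~~ cross_set x y /\ ~~ cross_set y x.
    move=> x' y' hx' hy'; split; first exact: nocross_sets uv hx' hy'.
    exact: nocross_sets vu hy' hx'.
  have Ee1 : forall z, z \in [set u; v] -> carc u v z by move=> z /Ae /andP[].
  have Ee2 : forall z, z \in [set u; v] -> carc v u z by move=> z /Ae /andP[].
  case: hx => [->|hx|hx]; case: hy => [->|hy|hy].
  + exact: (C12 _ _ Ee1 Ee2).1.
  + exact: (C12 _ _ (A1 _ hy) Ee2).2.
  + exact: (C12 _ _ Ee1 (A2 _ hy)).1.
  + exact: (C12 _ _ (A1 _ hx) Ee2).1.
  + exact: N1.
  + exact: (C12 _ _ (A1 _ hx) (A2 _ hy)).1.
  + exact: (C12 _ _ Ee1 (A2 _ hx)).2.
  + exact: (C12 _ _ (A1 _ hy) (A2 _ hx)).2.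
  + exact: N2.
- have mixed : forall S T, S \in cellsQ (half Q u v) (halfE E Q u v) ->
      T \in cellsQ (half Q v u) (halfE E Q v u) -> [disjoint Dsub S & Dsub T].
    move=> S T Sc Tc; apply/pred0P=> x /=; apply/negP=> /andP[xS xT].
    have Sc' := cell_of_half dE eE uQ vQ uv Sc.
    case: (HD1 S Sc) => HS _; case: (HD2 T Tc) => HT _.
    case/andP: (HS x xS) => /andP[xsS c2] _.
    case/andP: (HT x xT) => /andP[xsT _] _.
    case/cellQP: Sc => Sh _ _ _; case/cellQP: Tc => Th _ _ _.
    have := both_halves uv (subset_trans xsS Sh) (subset_trans xsT Th) (eqP c2).
    move=> ex; case/cellQP: Sc' => _ _ _ /(_ _ eE).
    by rewrite -ex (HS x xS).
  move=> S T /(cells_of_half _ dE eE uQ vQ uv) hS /(cells_of_half _ dE eE uQ vQ uv) hT ST.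
  case: hS hT => hS [] hT.
  + exact: D1.
  + exact: mixed.
  + by rewrite disjoint_sym; apply: mixed.
  + exact: D2.
Qed.

Definition SF K (add mul : K -> K -> K) :=
  [/\ associative add, commutative add, associative mul, commutative mul & left_distributive mul add].

Lemma SF_dr K (add mul : K -> K -> K) : SF add mul -> right_distributive mul add.
Proof. by case=> _ _ _ cM dl x y z; rewrite cM dl !(cM x). Qed.

Lemma SF_CA K (add mul : K -> K -> K) : SF add mul -> left_commutative mul.
Proof. by case=> _ _ aM cM _ x y z; rewrite !aM (cM x). Qed.

Lemma SF_sw K (add mul : K -> K -> K) : SF add mul ->
  forall x y z w, mul (mul x y) (mul z w) = mul (mul x w) (mul y z).
Proof.
move=> ax; have mCA := SF_CA ax; case: ax => _ _ aM cM _ x y z w.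
by rewrite -!aM (cM z w) (mCA y w z).
Qed.

Lemma alg_e K (add mul : K -> K -> K) one (ax : SF add mul) (lid : left_id one mul) F iF X :
  mul F iF = one -> mul (mul X iF) F = X.
Proof. by case: ax => _ _ aM cM _ FiF; rewrite -aM (cM iF) FiF cM lid. Qed.

Lemma alg_gen K (add mul : K -> K -> K) (ax : SF add mul) iF Au Av Bu Bv Ccd Aac Aad Cu Cv Du Dv :
  mul Au Ccd = add (mul Aac Du) (mul Aad Cu) ->
  mul Av Ccd = add (mul Aac Dv) (mul Aad Cv) ->
  mul (mul (add (mul Au Bv) (mul Av Bu)) iF) Ccd =
  add (mul Aac (mul (add (mul Du Bv) (mul Dv Bu)) iF))
      (mul Aad (mul (add (mul Cu Bv) (mul Cv Bu)) iF)).
Proof.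
move=> H1 H2; have dr := SF_dr ax; have sw := SF_sw ax.
case: ax => aA cA aM cM dl.
rewrite -aM dl !dl !dr.
rewrite (sw Au) (sw Av) H1 H2 !dl -!aM.
rewrite -!aA; congr add; rewrite !aA; congr add; exact: cA.
Qed.

Lemma alg_edge K (add mul : K -> K -> K) one (ax : SF add mul) (lid : left_id one mul)
   F iF Au Av Bu Bv Du Dv Aad :
  mul F iF = one -> mul Av Du = add (mul Au Dv) (mul Aad F) ->
  mul (mul (add (mul Au Bv) (mul Av Bu)) iF) Du =
  add (mul Au (mul (add (mul Du Bv) (mul Dv Bu)) iF)) (mul Aad Bu).
Proof.
move=> FiF H; have dr := SF_dr ax; have sw := SF_sw ax; have mCA := SF_CA ax.
case: ax => aA cA aM cM dl.
rewrite -aM !dl dr.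
rewrite (sw Av) H dl -aA.
congr add.
  by rewrite -!aM (cM iF Du) (mCA Bv).
congr add; first by rewrite -!aM.
by rewrite -aM (mCA F) FiF (cM Bu) lid.
Qed.

Definition Rel K (add mul : K -> K -> K) n (f : {set 'I_n} -> K) (a b c d : 'I_n) : Prop :=
  mul (f [set a; b]) (f [set c; d]) =
  add (mul (f [set a; c]) (f [set b; d])) (mul (f [set a; d]) (f [set b; c])).

Lemma Rel_cd K (add mul : K -> K -> K) (ax : SF add mul) n (f : {set 'I_n} -> K) a b c d :
  Rel add mul f a b c d -> Rel add mul f a b d c.
Proof.
case: ax => aA cA aM cM dl; rewrite /Rel => H; rewrite (setUC [set d] [set c]) H; exact: cA.
Qed.

Lemma Rel_ab K (add mul : K -> K -> K) (ax : SF add mul) n (f : {set 'I_n} -> K) a b c d :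
  Rel add mul f a b c d -> Rel add mul f b a c d.
Proof.
case: ax => aA cA aM cM dl; rewrite /Rel => H; rewrite (setUC [set b] [set a]) H.
by rewrite cA (cM (f [set a; d])) (cM (f [set a; c])).
Qed.

Lemma pos1 n (u v a : 'I_n) : carc u v a -> ~~ carc v u a -> cbetween u a v.
Proof. cycl. Qed.

Ltac cyc1 := unfold carc, cbetween in *; lia.

Lemma G_e n (u v a b : 'I_n) : crossv a b u v ->
  (cbetween u a v && cbetween v b u) || (cbetween v a u && cbetween u b v).
Proof.
rewrite /crossv /cyc4 => /orP[/andP[h1 h2]|/andP[h1 h2]].
  by apply/orP; right; apply/andP; split; cyc1.
by apply/orP; left; apply/andP; split; cyc1.
Qed.

Lemma G_i n (u v a b c d : 'I_n) : cbetween u a v -> cbetween v b u -> carc u v c -> carc u v d ->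
  (c:nat) != u -> (c:nat) != v -> (d:nat) != u -> (d:nat) != v -> crossv a b c d ->
  crossv a u c d && crossv a v c d.
Proof.
move=> h1 h2 h3 h4 h5 h6 h7 h8; rewrite /crossv /cyc4 => /orP[/andP[x y]|/andP[x y]].
  by apply/andP; split; apply/orP; left; apply/andP; split; cyc1.
by apply/andP; split; apply/orP; right; apply/andP; split; cyc1.
Qed.

Lemma G_ii n (u v a b d : 'I_n) : cbetween u a v -> cbetween v b u -> carc u v d ->
  (d:nat) != u -> (d:nat) != v -> crossv a b u d -> crossv a v u d.
Proof.
move=> h1 h2 h3 h4 h5; rewrite /crossv /cyc4 => /orP[/andP[x y]|/andP[x y]].
  by exfalso; cyc1.
by apply/orP; right; apply/andP; split; cyc1.
Qed.

Lemma G_iii n (u v a b d : 'I_n) : cbetween u a v -> cbetween v b u -> carc u v d ->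
  (d:nat) != u -> (d:nat) != v -> crossv a b v d -> crossv a u v d.
Proof.
move=> h1 h2 h3 h4 h5; rewrite /crossv /cyc4 => /orP[/andP[x y]|/andP[x y]].
  by apply/orP; left; apply/andP; split; cyc1.
by exfalso; cyc1.
Qed.

Lemma crossv_neq n (a b c d : 'I_n) : crossv a b c d -> (c:nat) != d.
Proof. cycl. Qed.

Lemma crossv_dist n (a b c d : 'I_n) : crossv a b c d ->
  (a != b /\ a != c /\ a != d) /\ (b != c /\ b != d /\ c != d).
Proof.
rewrite !ord_eqE /crossv /cyc4 => /orP[/andP[x y]|/andP[x y]]; (split; [split; [|split]|split; [|split]]); cyc1.
Qed.

Lemma half_l n (Q : {set 'I_n}) u v : u \in Q -> u \in half Q u v.
Proof. by move=> uQ; rewrite inE uQ arc_l. Qed.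
Lemma half_r n (Q : {set 'I_n}) u v : v \in Q -> v \in half Q u v.
Proof. by move=> vQ; rewrite inE vQ arc_r. Qed.

Lemma not_other_half n (Q : {set 'I_n}) u v x : u != v -> x \in half Q u v -> x != u -> x != v ->
  x \notin half Q v u.
Proof.
move=> uv; rewrite !inE => /andP[_ h1] xu xv; apply/negP=> /andP[_ h2].
by case: (arc_both uv h1 h2) => e; [rewrite e eqxx in xu|rewrite e eqxx in xv].
Qed.

Lemma core K (add mul : K -> K -> K) one (ax : SF add mul) (lid : left_id one mul)
  n (Q : {set 'I_n}) u v (f f1 f2 : {set 'I_n} -> K) (D1 : {set {set 'I_n}}) iF :
  u != v -> u \in Q -> v \in Q ->
  mul (f1 [set u; v]) iF = one ->
  (forall x y, x \in half Q u v -> y \in half Q u v -> x != y -> f [set x; y] = f1 [set x; y]) ->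
  (forall x y, x \in half Q v u -> y \in half Q v u -> x != y -> f [set x; y] = f2 [set x; y]) ->
  (forall a b, a \in half Q u v -> a \notin half Q v u -> b \in half Q v u -> b \notin half Q u v ->
     f [set a; b] = mul (add (mul (f1 [set a; u]) (f2 [set b; v]))
                             (mul (f1 [set a; v]) (f2 [set b; u]))) iF) ->
  weak_frieze add mul (half Q u v) D1 f1 ->
  forall a b c d, a \in half Q u v -> a \notin half Q v u -> b \in half Q v u -> b \notin half Q u v ->
    c \in half Q u v -> d \in half Q u v -> crossv a b c d -> [set c; d] \in D1 ->
    [set c; d] != [set u; v] -> Rel add mul f a b c d.
Proof.
move=> uv uQ vQ FiF fQ1 fQ2 fX W a b c d aQ1 aQ2 bQ2 bQ1.
have aQ := subsetP (half_sub Q u v) a aQ1.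
have bQ := subsetP (half_sub Q v u) b bQ2.
have ca : cbetween u a v.
  by apply: pos1; [move: aQ1|move: aQ2]; rewrite inE aQ.
have cb : cbetween v b u.
  by apply: pos1; [move: bQ2|move: bQ1]; rewrite inE bQ.
have uQ1 := half_l v uQ; have vQ1 := half_r u vQ.
have uQ2 := half_r v uQ; have vQ2 := half_l u vQ.
have fXd : forall x, x \in half Q u v -> x != u -> x != v ->
    f [set b; x] = mul (add (mul (f1 [set x; u]) (f2 [set b; v]))
                           (mul (f1 [set x; v]) (f2 [set b; u]))) iF.
  move=> x xQ xu xv; rewrite setUC; apply: fX => //; exact: not_other_half.
have arcQ : forall x, x \in half Q u v -> carc u v x by move=> x; rewrite inE => /andP[].
suff main : forall c d, c \in half Q u v -> d \in half Q u v -> crossv a b c d ->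
    [set c; d] \in D1 -> [set c; d] != [set u; v] -> d != u -> d != v -> Rel add mul f a b c d.
  move=> cQ dQ cr cD ce.
  have cd : c != d by apply: crossv_neq cr.
  case: (eqVneq d u) => [du|du]; last case: (eqVneq d v) => [dv|dv]; last exact: main.
  - subst d.
    have cu : c != u by [].
    have cv : c != v by apply/eqP=> e; subst c; case/negP: ce; rewrite setUC.
    apply: Rel_cd => //; apply: main => //.
    + by rewrite crossv_sym2.
    + by rewrite setUC.
    + by rewrite setUC.
  - subst d.
    have cv : c != v by [].
    have cu : c != u by apply/eqP=> e; subst c; rewrite eqxx in ce.
    apply: Rel_cd => //; apply: main => //.
    + by rewrite crossv_sym2.
    + by rewrite setUC.
    + by rewrite setUC.
move=> {}c {}d cQ dQ cr cD ce du dv.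
have [[ab [ac ad]] [bc [bd cd]]] := crossv_dist cr.
have bu : b != u by apply/eqP=> e; rewrite e uQ1 in bQ1.
have bv : b != v by apply/eqP=> e; rewrite e vQ1 in bQ1.
rewrite /Rel fX // (fQ1 c d) // (fQ1 a c) // (fQ1 a d) //.
case: (eqVneq c u) => [cu|cu].
  subst c.
  have cr' := G_ii ca cb (arcQ d dQ) du dv cr.
  have R := W a v u d aQ1 vQ1 uQ1 dQ cr' cD.
  rewrite /Rel (setUC [set v] [set d]) (setUC [set v] [set u]) (setUC [set u] [set d]) in R.
  rewrite (fXd d) // (fQ2 b u) // (setUC [set u] [set d]).
  exact: (alg_edge ax lid _ _ FiF R).
case: (eqVneq c v) => [cv|cv].
  subst c.
  have cr' := G_iii ca cb (arcQ d dQ) du dv cr.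
  have R := W a u v d aQ1 uQ1 vQ1 dQ cr' cD.
  rewrite /Rel (setUC [set v] [set d]) (setUC [set u] [set d]) in R.
  rewrite (fXd d) // (fQ2 b v) // (setUC [set v] [set d]).
  case: ax (ax) => aA cA aM cM dl ax'.
  rewrite (cA (mul (f1 [set a; u]) _)) (cA (mul (f1 [set d; u]) _)).
  exact: (alg_edge ax' lid _ _ FiF R).
have /andP[cr1 cr2] := G_i ca cb (arcQ c cQ) (arcQ d dQ) cu cv du dv cr.
have R1 := W a u c d aQ1 uQ1 cQ dQ cr1 cD.
have R2 := W a v c d aQ1 vQ1 cQ dQ cr2 cD.
rewrite /Rel (setUC [set u] [set d]) (setUC [set u] [set c]) in R1.
rewrite /Rel (setUC [set v] [set d]) (setUC [set v] [set c]) in R2.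
rewrite (fXd d) // (fXd c) //.
exact: (alg_gen ax _ _ _ R1 R2).
Qed.

Lemma Rel_transfer K (add mul : K -> K -> K) n (S : {set 'I_n}) (f g : {set 'I_n} -> K) a b c d :
  (forall x y, x \in S -> y \in S -> x != y -> g [set x; y] = f [set x; y]) ->
  a \in S -> b \in S -> c \in S -> d \in S -> crossv a b c d ->
  Rel add mul f a b c d -> Rel add mul g a b c d.
Proof.
move=> H aS bS cS dS cr; have [[ab [ac ad]] [bc [bd cd]]] := crossv_dist cr.
by rewrite /Rel !H.
Qed.

Lemma side K (add mul : K -> K -> K) one (ax : SF add mul) (lid : left_id one mul)
  n (Q : {set 'I_n}) u v (f f1 f2 : {set 'I_n} -> K) (D1 : {set {set 'I_n}}) iF :
  u != v -> u \in Q -> v \in Q ->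
  mul (f1 [set u; v]) iF = one ->
  (forall x y, x \in half Q u v -> y \in half Q u v -> x != y -> f [set x; y] = f1 [set x; y]) ->
  (forall x y, x \in half Q v u -> y \in half Q v u -> x != y -> f [set x; y] = f2 [set x; y]) ->
  (forall a b, a \in half Q u v -> a \notin half Q v u -> b \in half Q v u -> b \notin half Q u v ->
     f [set a; b] = mul (add (mul (f1 [set a; u]) (f2 [set b; v]))
                             (mul (f1 [set a; v]) (f2 [set b; u]))) iF) ->
  weak_frieze add mul (half Q u v) D1 f1 ->
  forall a b c d, a \in Q -> b \in Q ->
    c \in half Q u v -> d \in half Q u v -> crossv a b c d -> [set c; d] \in D1 ->
    [set c; d] != [set u; v] -> Rel add mul f a b c d.
Proof.
move=> uv uQ vQ FiF fQ1 fQ2 fX W a b c d aQ bQ cQ dQ cr cD ce.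
have core' := core ax lid uv uQ vQ FiF fQ1 fQ2 fX W.
have inh : forall x, x \in Q -> x \notin half Q u v -> x \in half Q v u.
  move=> x xQ; rewrite !inE xQ /= => h; have := arc_cover x uv; by rewrite (negbTE h).
have arcQ : forall x y, x \in half Q y u -> carc y u x by move=> x y; rewrite inE => /andP[].
have arcQ' : forall x, x \in half Q u v -> carc u v x by move=> x; rewrite inE => /andP[].
have contra : a \in half Q v u -> b \in half Q v u -> False.
  move=> h1 h2; have := nocross_arc uv (arcQ' c cQ) (arcQ' d dQ) (arcQ a v h1) (arcQ b v h2).
  by rewrite crossv_sym3 cr.
case: (boolP (a \in half Q u v)) => aQ1; case: (boolP (b \in half Q u v)) => bQ1.
- by apply: (Rel_transfer fQ1) => //; apply: W.
- have bQ2 := inh b bQ bQ1.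
  case: (boolP (a \in half Q v u)) => aQ2; first by case: contra.
  exact: core'.
- have aQ2 := inh a aQ aQ1.
  case: (boolP (b \in half Q v u)) => bQ2; first by case: contra.
  apply: Rel_ab => //; apply: core' => //; by rewrite crossv_sym1.
- by case: contra; apply: inh.
Qed.

Lemma alg_c K (add mul : K -> K -> K) one (ax : SF add mul) (lid : left_id one mul) F iF X :
  mul F iF = one -> mul (mul X F) iF = X.
Proof. by case: ax => _ _ aM cM _ FiF; rewrite -aM FiF cM lid. Qed.

Lemma mul_cancel K (add mul : K -> K -> K) one (ax : SF add mul) (lid : left_id one mul) F iF X Y :
  mul F iF = one -> mul X F = mul Y F -> X = Y.
Proof.
move=> FiF e; rewrite -(alg_c ax lid X FiF) -(alg_c ax lid Y FiF); congruence.
Qed.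

Definition pk n (A P : {set 'I_n}) (dflt : 'I_n) := odflt dflt [pick x in A | x \in P].

Lemma pkE n (P : {set 'I_n}) a b dflt : a \in P -> b \notin P -> pk [set a; b] P dflt = a.
Proof.
move=> aP bP; rewrite /pk; case: pickP => [x /andP[]|H] /=.
  by rewrite !inE => /orP[]/eqP-> //; rewrite (negbTE bP).
by move: (H a); rewrite !inE eqxx aP.
Qed.

Definition frieze_goal K (add mul : K -> K -> K) n (Q : {set 'I_n}) (E : {set {set 'I_n}})
  (Dsub : {set 'I_n} -> {set {set 'I_n}}) : Prop :=
 forall fsub : {set 'I_n} -> {set 'I_n} -> K,
  (forall S, S \in cellsQ Q E -> weak_frieze add mul S (Dsub S) (fsub S)) ->
  (forall S T d, S \in cellsQ Q E -> T \in cellsQ Q E -> is_diag S d -> is_diag T d ->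
     fsub S d = fsub T d) ->
  exists f : {set 'I_n} -> K,
    [/\ weak_frieze add mul Q (Dof Q E Dsub) f,
        (forall S d, S \in cellsQ Q E -> is_diag S d -> f d = fsub S d)
      & (forall g : {set 'I_n} -> K, weak_frieze add mul Q (Dof Q E Dsub) g ->
           (forall S d, S \in cellsQ Q E -> is_diag S d -> g d = fsub S d) ->
           forall d, is_diag Q d -> g d = f d)].

Lemma wf_mono K (add mul : K -> K -> K) n (S S' : {set 'I_n}) (D D' : {set {set 'I_n}}) (f : {set 'I_n} -> K) :
  S' \subset S -> (forall x, x \in D' -> x \in D) -> weak_frieze add mul S D f ->
  weak_frieze add mul S' D' f.
Proof.
move=> SS DD W a b c d aS bS cS dS cr cD.
by apply: W; rewrite ?(subsetP SS) // DD.
Qed.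

Lemma diag2 n (S : {set 'I_n}) x y : x \in S -> y \in S -> x != y -> is_diag S [set x; y].
Proof. by move=> xS yS xy; apply/diagP; exists x, y. Qed.

Lemma strict_pos n (Q : {set 'I_n}) u v a : a \in Q -> cbetween u a v ->
  a \in half Q u v /\ a \notin half Q v u.
Proof.
move=> aQ c; rewrite !inE aQ /=; split; first by rewrite /carc c !orbT.
by move: c; cyc1.
Qed.

Lemma cross_of_pos n (u v a b : 'I_n) : cbetween u a v -> cbetween v b u -> crossv a b u v.
Proof. by move=> h1 h2; rewrite /crossv /cyc4; apply/orP; right; apply/andP; split; cyc1. Qed.

Lemma sub2 n (A : {set 'I_n}) x y : x \in A -> y \in A -> [set x; y] \subset A.
Proof. by move=> xA yA; apply/subsetP=> z; rewrite !inE => /orP[]/eqP->. Qed.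

Lemma pkE' n (P : {set 'I_n}) a b dflt : b \in P -> a \notin P -> pk [set a; b] P dflt = b.
Proof. by move=> bP aP; rewrite setUC; apply: pkE. Qed.

Lemma neq_mem n (A : {set 'I_n}) x y : x \notin A -> y \in A -> x != y.
Proof. by move=> xA yA; apply/eqP=> e; rewrite e yA in xA. Qed.

Lemma partC0 K (add mul : K -> K -> K) n (Q : {set 'I_n}) Dsub : subpolygon Q ->
  frieze_goal add mul Q set0 Dsub.
Proof.
move=> Qp fsub W C; have Qc : Q \in cellsQ Q set0 := proj2 (cells0 Q Qp) erefl.
exists (fsub Q); split.
- by apply: wf_mono (subxx Q) _ (W Q Qc) => x /(Dof0 _ _ Qp).
- by move=> S d /(cells0 _ Qp) ->.
- by move=> g _ Rg d dd; apply: Rg.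
Qed.

Lemma partC K (add mul : K -> K -> K) (HK : is_semifield add mul) k n (Q : {set 'I_n})
  (E : {set {set 'I_n}}) Dsub : (#|E| <= k)%N -> subpolygon Q -> is_dissection Q E ->
  (forall S, S \in cellsQ Q E -> is_dissection S (Dsub S)) -> frieze_goal add mul Q E Dsub.
Proof.
case: HK => aA [cA [aM [cM [[one [lid inv]] dl]]]].
have ax : SF add mul by [].
elim: k Q E => [|k IH] Q E cE Qp dE HD.
  have E0 : E = set0 by apply/eqP; move: cE; rewrite leqn0 cards_eq0.
  by subst E; apply: partC0.
case: (set_0Vmem E) => [E0|[e eE]]; first by subst E; apply: partC0.
case: (pick_e dE eE) => u [v [ee uQ vQ uv ne]]; subst e.
have eE' : [set v; u] \in E by rewrite setUC.
have vu : v != u by rewrite eq_sym.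
have ne' : ~~ is_edge Q [set v; u] by rewrite setUC.
have HD1 : forall S, S \in cellsQ (half Q u v) (halfE E Q u v) -> is_dissection S (Dsub S).
  by move=> S Sc; apply: HD; apply: (cell_of_half dE eE uQ vQ uv Sc).
have HD2 : forall S, S \in cellsQ (half Q v u) (halfE E Q v u) -> is_dissection S (Dsub S).
  by move=> S Sc; apply: HD; apply: (cell_of_half dE eE' vQ uQ vu Sc).
have h1 : (#|halfE E Q u v| <= k)%N by rewrite -ltnS; apply: leq_trans (halfE_card Q eE) cE.
have h2 : (#|halfE E Q v u| <= k)%N by rewrite -ltnS; apply: leq_trans (halfE_card Q eE') cE.
have dE1 := halfE_diss dE uQ vQ uv.
have dE2 := halfE_diss dE vQ uQ vu.
have P1 := half_poly uQ vQ uv ne.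
have P2 := half_poly vQ uQ vu ne'.
have cellL : forall S, S \in cellsQ (half Q u v) (halfE E Q u v) -> S \in cellsQ Q E.
  by move=> S Sc; apply: (cell_of_half dE eE uQ vQ uv Sc).
have cellR : forall S, S \in cellsQ (half Q v u) (halfE E Q v u) -> S \in cellsQ Q E.
  by move=> S Sc; apply: (cell_of_half dE eE' vQ uQ vu Sc).
move=> fsub W C.
have [f1 [Wf1 Rf1 Uf1]] := IH _ _ h1 P1 dE1 HD1 fsub (fun S Sc => W S (cellL S Sc))
  (fun S T d Sc Tc => C S T d (cellL S Sc) (cellL T Tc)).
have [f2 [Wf2 Rf2 Uf2]] := IH _ _ h2 P2 dE2 HD2 fsub (fun S Sc => W S (cellR S Sc))
  (fun S T d Sc Tc => C S T d (cellR S Sc) (cellR T Tc)).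
have [S1 S1c eS1] := partA (leqnn _) P1 dE1 (half_edge_e uQ vQ uv).
have [S2 S2c eS2] : exists2 S, S \in cellsQ (half Q v u) (halfE E Q v u) & [set u; v] \subset S.
  by rewrite setUC; apply: (partA (leqnn _) P2 dE2 (half_edge_e vQ uQ vu)).
have dg : forall S : {set 'I_n}, [set u; v] \subset S -> is_diag S [set u; v].
  by move=> S h; rewrite /is_diag h cards2 uv.
have F12 : f1 [set u; v] = f2 [set u; v].
  rewrite (Rf1 S1 _ S1c (dg _ eS1)) (Rf2 S2 _ S2c (dg _ eS2)).
  exact: C (cellL _ S1c) (cellR _ S2c) (dg _ eS1) (dg _ eS2).
have [iF FiF] := inv (f1 [set u; v]).
pose f := fun d : {set 'I_n} =>
  if d \subset half Q u v then f1 d else if d \subset half Q v u then f2 d else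
  mul (add (mul (f1 [set pk d (half Q u v) u; u]) (f2 [set pk d (half Q v u) v; v]))
           (mul (f1 [set pk d (half Q u v) u; v]) (f2 [set pk d (half Q v u) v; u]))) iF.
have fQ1 : forall x y, x \in half Q u v -> y \in half Q u v -> x != y -> f [set x; y] = f1 [set x; y].
  by move=> x y xQ yQ _; rewrite /f (sub2 xQ yQ).
have fQ2 : forall x y, x \in half Q v u -> y \in half Q v u -> x != y -> f [set x; y] = f2 [set x; y].
  move=> x y xQ yQ xy; rewrite /f; case: ifP => h; last by rewrite (sub2 xQ yQ).
  by rewrite (both_halves uv h (sub2 xQ yQ)) ?cards2 ?xy.
have fX : forall a b, a \in half Q u v -> a \notin half Q v u -> b \in half Q v u ->
    b \notin half Q u v ->
    f [set a; b] = mul (add (mul (f1 [set a; u]) (f2 [set b; v]))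
                            (mul (f1 [set a; v]) (f2 [set b; u]))) iF.
  move=> a b aQ1 aQ2 bQ2 bQ1; rewrite /f.
  have -> : ([set a; b] \subset half Q u v) = false.
    by apply/negbTE/negP=> /subsetP /(_ b (set22 a b)) h; rewrite h in bQ1.
  have -> : ([set a; b] \subset half Q v u) = false.
    by apply/negbTE/negP=> /subsetP /(_ a (set21 a b)) h; rewrite h in aQ2.
  by rewrite (pkE _ aQ1 bQ1) (pkE' _ bQ2 aQ2).
have FiF2 : mul (f2 [set v; u]) iF = one by rewrite setUC -F12.
have fX' : forall a b, a \in half Q v u -> a \notin half Q u v -> b \in half Q u v ->
    b \notin half Q v u ->
    f [set a; b] = mul (add (mul (f2 [set a; v]) (f1 [set b; u]))
                            (mul (f2 [set a; u]) (f1 [set b; v]))) iF.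
  move=> a b aQ2 aQ1 bQ1 bQ2; rewrite setUC fX //.
  by rewrite (cM (f1 [set b; u])) (cM (f1 [set b; v])).
have uQ1 := half_l v uQ; have vQ1 := half_r u vQ.
have uQ2 := half_r v uQ; have vQ2 := half_l u vQ.
have e_rel0 : forall a b, a \in Q -> b \in Q -> cbetween u a v -> cbetween v b u ->
    Rel add mul f a b u v.
  move=> a b aQ bQ ca cb.
  have [aQ1 aQ2] := strict_pos aQ ca; have [bQ2 bQ1] := strict_pos bQ cb.
  have au := neq_mem aQ2 uQ2; have av := neq_mem aQ2 vQ2.
  have bu := neq_mem bQ1 uQ1; have bv := neq_mem bQ1 vQ1.
  rewrite /Rel fX // (fQ1 u v) // (fQ1 a u) // (fQ2 b v) // (fQ1 a v) // (fQ2 b u) //.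
  exact: (alg_e ax lid _ FiF).
have e_rel : forall a b, a \in Q -> b \in Q -> crossv a b u v -> Rel add mul f a b u v.
  move=> a b aQ bQ cr; case/orP: (G_e cr) => /andP[ca cb]; first exact: e_rel0.
  by apply: Rel_ab => //; apply: e_rel0.
have Wf : weak_frieze add mul Q (Dof Q E Dsub) f.
  move=> a b c d aQ bQ cQ dQ cr cD.
  case: (eqVneq [set c; d] [set u; v]) => [ce|ce].
    case: (set2_eq ce) => [[ec ed]|[ec ed]]; subst c d; first exact: e_rel.
    by apply: Rel_cd => //; apply: e_rel; rewrite // crossv_sym2.
  case: (Dof_split dE eE uQ vQ uv cD) => [ce'|h|h]; first by rewrite ce' eqxx in ce.
    have := Dof_sub dE1 HD1 h; case/andP=> /subsetP hs _.
    have cQ1 := hs c (set21 c d); have dQ1 := hs d (set22 c d).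
    exact: (side ax lid uv uQ vQ FiF fQ1 fQ2 fX Wf1 aQ bQ cQ1 dQ1 cr h ce).
  have := Dof_sub dE2 HD2 h; case/andP=> /subsetP hs _.
  have cQ2 := hs c (set21 c d); have dQ2 := hs d (set22 c d).
  have ce2 : [set c; d] != [set v; u] by rewrite (setUC [set v]).
  exact: (side ax lid vu vQ uQ FiF2 fQ2 fQ1 fX' Wf2 aQ bQ cQ2 dQ2 cr h ce2).
exists f; split => //.
- move=> S d Sc dd; case/(cells_of_half _ dE eE uQ vQ uv): Sc => Sc.
    case/diagP: (dd) => x [y [xS yS xy ed]]; subst d.
    case/cellQP: (Sc) => Sh _ _ _.
    by rewrite fQ1 ?(subsetP Sh) // (Rf1 _ _ Sc dd).
  case/diagP: (dd) => x [y [xS yS xy ed]]; subst d.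
  case/cellQP: (Sc) => Sh _ _ _.
  by rewrite fQ2 ?(subsetP Sh) // (Rf2 _ _ Sc dd).
- move=> g Wg Rg d dd.
  have U1 := Uf1 g (wf_mono (half_sub Q u v) (fun x h => Dof_of_half dE eE uQ vQ uv h) Wg)
    (fun S d Sc => Rg S d (cellL S Sc)).
  have U2 := Uf2 g (wf_mono (half_sub Q v u) (fun x h => Dof_of_half dE eE' vQ uQ vu h) Wg)
    (fun S d Sc => Rg S d (cellR S Sc)).
  have gQ1 : forall x y, x \in half Q u v -> y \in half Q u v -> x != y -> g [set x; y] = f [set x; y].
    by move=> x y xQ yQ xy; rewrite U1 ?fQ1 // diag2.
  have gQ2 : forall x y, x \in half Q v u -> y \in half Q v u -> x != y -> g [set x; y] = f [set x; y].
    by move=> x y xQ yQ xy; rewrite U2 ?fQ2 // diag2.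
  have key : forall x y, x \in half Q u v -> x \notin half Q v u -> y \in half Q v u ->
      y \notin half Q u v -> g [set x; y] = f [set x; y].
    move=> x y xQ1 xQ2 yQ2 yQ1.
    have xQ := subsetP (half_sub Q u v) x xQ1; have yQ := subsetP (half_sub Q v u) y yQ2.
    have cx : cbetween u x v by apply: pos1; [move: xQ1|move: xQ2]; rewrite inE xQ.
    have cy : cbetween v y u by apply: pos1; [move: yQ2|move: yQ1]; rewrite inE yQ.
    have cr := cross_of_pos cx cy.
    have eD : [set u; v] \in Dof Q E Dsub by apply/DofP; left.
    have Rg' := Wg x y u v xQ yQ uQ vQ cr eD.
    have Rf' := Wf x y u v xQ yQ uQ vQ cr eD.
    have xu := neq_mem xQ2 uQ2; have xv := neq_mem xQ2 vQ2.
    have yu := neq_mem yQ1 uQ1; have yv := neq_mem yQ1 vQ1.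
    move: Rg'; rewrite /Rel (gQ1 u v) // (gQ1 x u) // (gQ2 y v) // (gQ1 x v) // (gQ2 y u) //.
    rewrite -Rf' (fQ1 u v) // => e.
    exact: (mul_cancel ax lid FiF e).
  have inh : forall x, x \in Q -> x \notin half Q u v -> x \in half Q v u.
    move=> x xQ; rewrite !inE xQ /= => h; have := arc_cover x uv; by rewrite (negbTE h).
  case/diagP: dd => x [y [xQ yQ xy ->]].
  case: (boolP (x \in half Q u v)) => xQ1; case: (boolP (y \in half Q u v)) => yQ1.
  + exact: gQ1.
  + have yQ2 := inh y yQ yQ1.
    case: (boolP (x \in half Q v u)) => xQ2; first exact: gQ2.
    exact: key.
  + have xQ2 := inh x xQ xQ1.
    case: (boolP (y \in half Q v u)) => yQ2; first exact: gQ2.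
    by rewrite setUC; apply: key.
  + by apply: gQ2 => //; apply: inh.
Qed.

Unset Implicit Arguments.

Theorem theoremB (K : Type) (add mul : K -> K -> K) (HK : is_semifield add mul)
  (n : nat) (Hn : (3 <= n)%N)
  (E : {set {set 'I_n}}) (HE : is_dissection [set: 'I_n] E)
  (Dsub : {set 'I_n} -> {set {set 'I_n}})
  (HD : forall S, S \in cells E -> is_dissection S (Dsub S)) :
  let D := E :|: \bigcup_(S in cells E) Dsub S in
  (is_dissection [set: 'I_n] D
   /\ (forall S, S \in cells E -> [disjoint E & Dsub S])
   /\ (forall S T, S \in cells E -> T \in cells E -> S != T ->
         [disjoint Dsub S & Dsub T]))
  /\
  (forall fsub : {set 'I_n} -> {set 'I_n} -> K,
     (forall S, S \in cells E -> weak_frieze add mul S (Dsub S) (fsub S)) ->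
     (forall S T d, S \in cells E -> T \in cells E ->
        is_diag S d -> is_diag T d -> fsub S d = fsub T d) ->
     exists f : {set 'I_n} -> K,
       [/\ weak_frieze add mul [set: 'I_n] D f,
           (forall S d, S \in cells E -> is_diag S d -> f d = fsub S d)
         & (forall g : {set 'I_n} -> K,
              weak_frieze add mul [set: 'I_n] D g ->
              (forall S d, S \in cells E -> is_diag S d -> g d = fsub S d) ->
              forall d, is_diag [set: 'I_n] d -> g d = f d)]).
Proof.
move=> D.
have Qp : subpolygon [set: 'I_n] by rewrite /subpolygon cardsT card_ord.
have cT := cellsT E.
have HD' : forall S, S \in cellsQ [set: 'I_n] E -> is_dissection S (Dsub S) by rewrite cT.
have DD : D = Dof [set: 'I_n] E Dsub by rewrite /D /Dof cT.
have [B1 B2] := partB (leqnn _) Qp HE HD'.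
split; [split; [|split]|].
- by rewrite DD.
- move=> S Sc; apply/pred0P=> x /=; apply/negP=> /andP[xE xS].
  have Sc' : S \in cellsQ [set: 'I_n] E by rewrite cT.
  case/cellQP: Sc' => _ _ _ /(_ x xE).
  by case: (HD S Sc) => H _; rewrite (H x xS).
- by move=> S T Sc Tc; apply: B2; rewrite cT.
- move=> fsub W C.
  have FG : frieze_goal add mul [set: 'I_n] E Dsub by apply: (partC HK (leqnn _) Qp HE HD').
  move: (FG fsub); rewrite /frieze_goal cT -DD; apply => //.
Qed.
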